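(* Let $p_0,q\in\mathcal S^{d-1}$ and consider the preference dynamics with the fixed recommendation $q_t=q$ for all $t\ge 0$, i.e. $\tilde p_{t+1}=p_t+\eta_t\,(p_t^\top q)\,q$, $p_{t+1}=\tilde p_{t+1}/\|\tilde p_{t+1}\|_2$, with step sizes either constant ($\eta_t=\eta$) or decreasing ($\eta_t=\frac{\eta}{t+s}$). Then $p_t\to q$ as $t\to\infty$ if $p_0^\top q>0$, and $p_t\to -q$ if $p_0^\top q<0$. Furthermore, for every $t\ge0$, $p_t$ lies in the cone generated by $p_0$ and $\mathrm{sgn}(p_0^\top q)\,q$ (i.e. $p_t$ is a nonnegative linear combination of these two vectors). In particular, when $p_0^\top q\neq 0$, for all $t\ge 0$, \[(p_t^\top q)^{-2}=1+\gamma_t^2\big((p_0^\top q)^{-2}-1\big),\qquad \gamma_t=\begin{cases}(\eta+1)^{-t}, & \eta_t=\eta,\\[2pt] \prod_{k=0}^{\eta-1}\frac{s+k}{t+s+k}, & \eta_t=\frac{\eta}{t+s}.\end{cases}\]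
   Context: $\mathcal S^{d-1}$ denotes the unit sphere in $\mathbb{R}^d$. In the constant step-size setting $\eta>0$ is a constant; in the decreasing step-size setting $\eta$ and $s$ are positive integers. $\mathrm{sgn}$ denotes the sign function. *)

(* Defs.v *)
From HB Require Import structures.
From mathcomp Require Import all_boot all_order all_algebra.
From mathcomp Require Import all_classical all_reals all_analysis.
Set Implicit Arguments. Unset Strict Implicit. Unset Printing Implicit Defensive.
Import Order.TTheory GRing.Theory Num.Theory.
Import numFieldNormedType.Exports.
Local Open Scope ring_scope.

Definition dotv {R : realType} {d : nat} (u v : 'rV[R]_d) : R := (u *m v^T) 0 0.
Definition norm2 {R : realType} {d : nat} (u : 'rV[R]_d) : R := Num.sqrt (dotv u u).

Definition on_sphere {R : realType} {d : nat} (u : 'rV[R]_d) : Prop := norm2 u = 1.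

Inductive schedule (R : realType) : Type :=
| Constant of R
| Decreasing of nat & nat.

Definition valid_schedule {R : realType} (sc : schedule R) : Prop :=
  match sc with
  | Constant eta => 0 < eta
  | Decreasing eta s => (0 < eta)%N /\ (0 < s)%N
  end.

Definition step {R : realType} (sc : schedule R) (t : nat) : R :=
  match sc with
  | Constant eta => eta
  | Decreasing eta s => eta%:R / (t + s)%:R
  end.

Fixpoint pref {R : realType} {d : nat} (sc : schedule R) (p0 q : 'rV[R]_d) (t : nat)
  : 'rV[R]_d :=
  match t with
  | 0 => p0
  | t'.+1 =>
      let p := pref sc p0 q t' in
      let pt := p + (step sc t' * dotv p q) *: q in
      (norm2 pt)^-1 *: pt
  end.

Definition gamma {R : realType} (sc : schedule R) (t : nat) : R :=
  match sc with
  | Constant eta => (eta + 1) ^- t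
  | Decreasing eta s => \prod_(k < eta) ((s + k)%:R / (t + s + k)%:R)
  end.

(* Main.v *)
Set Warnings "-all".
Require Import Defs.
From HB Require Import structures.
From mathcomp Require Import all_boot all_order all_algebra.
From mathcomp Require Import all_classical all_reals all_analysis.
From mathcomp Require Import ring lra.
Import Order.TTheory GRing.Theory Num.Theory.
Import numFieldNormedType.Exports.
Local Open Scope classical_set_scope.
Local Open Scope ring_scope.

Section Dot.
Variables (R : realType) (d : nat).
Implicit Types u v w : 'rV[R]_d.

Lemma dotvE u v : dotv u v = \sum_i u 0 i * v 0 i.
Proof. by rewrite /dotv mxE; apply: eq_bigr => i _; rewrite mxE. Qed.
Lemma dotvC u v : dotv u v = dotv v u.
Proof. rewrite !dotvE; apply: eq_bigr => i _; exact: mulrC. Qed.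
Lemma dotvDl u v w : dotv (u + v) w = dotv u w + dotv v w.
Proof. rewrite !dotvE -big_split; apply: eq_bigr => i _; by rewrite mxE mulrDl. Qed.
Lemma dotvZl a u w : dotv (a *: u) w = a * dotv u w.
Proof. rewrite !dotvE mulr_sumr; apply: eq_bigr => i _; rewrite mxE; ring. Qed.
Lemma dotvNl u w : dotv (- u) w = - dotv u w.
Proof. rewrite !dotvE -sumrN; apply: eq_bigr => i _; rewrite mxE; ring. Qed.
Lemma dotvDr u v w : dotv w (u + v) = dotv w u + dotv w v.
Proof. by rewrite !(dotvC w) dotvDl. Qed.
Lemma dotvZr a u w : dotv w (a *: u) = a * dotv w u.
Proof. by rewrite !(dotvC w) dotvZl. Qed.
Lemma dotvNr u w : dotv w (- u) = - dotv w u.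
Proof. by rewrite !(dotvC w) dotvNl. Qed.
Lemma dotv_ge0 u : 0 <= dotv u u.
Proof. rewrite dotvE; apply: sumr_ge0 => i _; by rewrite -expr2 sqr_ge0. Qed.
Lemma entry_le u i : (u 0 i) ^+ 2 <= dotv u u.
Proof.
rewrite dotvE (bigD1 i) //= -expr2 lerDl; apply: sumr_ge0 => j _.
by rewrite -expr2 sqr_ge0.
Qed.
Lemma sphere_dot u : on_sphere u -> dotv u u = 1.
Proof. by rewrite /on_sphere /norm2 => h; rewrite -(sqr_sqrtr (dotv_ge0 u)) h expr1n. Qed.
Lemma cs u v : dotv u u = 1 -> dotv v v = 1 -> (dotv u v) ^+ 2 <= 1.
Proof.
move=> hu hv; have := dotv_ge0 (u - (dotv u v) *: v).
rewrite dotvDl !dotvDr !dotvNl !dotvNr !dotvZl !dotvZr hu hv (dotvC v u).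
set x := dotv u v => h; nra.
Qed.

Lemma step_facts (eta : R) (p q : 'rV[R]_d) : 0 <= eta -> dotv p p = 1 -> dotv q q = 1 ->
  let x := dotv p q in let pt := p + (eta * x) *: q in
  let n := norm2 pt in
  dotv pt pt = 1 + (eta * (2 + eta)) * x ^+ 2 /\ 0 < n /\ n ^+ 2 = dotv pt pt /\
  dotv (n^-1 *: pt) (n^-1 *: pt) = 1 /\ dotv (n^-1 *: pt) q = n^-1 * ((1 + eta) * x).
Proof.
move=> e0 hp hq x pt n.
have E : dotv pt pt = 1 + (eta * (2 + eta)) * x ^+ 2.
  rewrite /pt dotvDl !dotvDr !dotvZl !dotvZr hp hq (dotvC q p) -/x; ring.
have n2 : n ^+ 2 = dotv pt pt by rewrite /n /norm2 sqr_sqrtr // dotv_ge0.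
have n0 : 0 < n.
  rewrite /n /norm2 sqrtr_gt0 E.
  have : 0 <= eta * (2 + eta) * x ^+ 2 by rewrite mulr_ge0 ?sqr_ge0 // mulr_ge0 // addr_ge0.
  lra.
split => //; split => //; split => //; split.
  rewrite dotvZl dotvZr -n2; field; lra.
rewrite dotvZl /pt dotvDl dotvZl hq -/x; ring.
Qed.
End Dot.
Section Tel.
Variable R : realType.
Lemma Gtel (s m t : nat) : (0 < s)%N ->
  \prod_(k < m) ((s + k)%:R / (t.+1 + s + k)%:R : R) * (t + s + m)%:R
  = \prod_(k < m) ((s + k)%:R / (t + s + k)%:R : R) * (t + s)%:R.
Proof.
move=> s0; elim: m => [|m IH]; first by rewrite !big_ord0 addn0.
rewrite !big_ord_recr /=.
set A := \prod_(k < m) _ in IH *; set B := \prod_(k < m) _ in IH *.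
have pos : forall n : nat, (0 < n)%N -> (n%:R : R) != 0.
  by move=> n n0; rewrite pnatr_eq0 -lt0n.
have hTS : ((t + s)%:R : R) != 0 by apply: pos; rewrite addn_gt0 s0 orbT.
have hB : B = A * (t + s + m)%:R / (t + s)%:R.
  by rewrite IH mulfK.
rewrite hB.
have h1 : ((t + s + m)%:R : R) != 0 by apply: pos; rewrite !addn_gt0 s0 !orbT.
have h2 : ((t.+1 + s + m)%:R : R) != 0 by apply: pos; rewrite !addn_gt0 s0 !orbT.
have e : (t + s + m.+1 = t.+1 + s + m)%N by rewrite addnS !addSn.
rewrite e; field.
have ht : 0 <= (t%:R : R) by rewrite ler0n.
have hm : 0 <= (m%:R : R) by rewrite ler0n.
have hs : 1 <= (s%:R : R) by rewrite ler1n.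
by apply/and3P; split; apply/negP => /eqP; lra.
Qed.
End Tel.
Section Dyn.
Variables (R : realType) (d : nat) (sc : schedule R) (p0 q : 'rV[R]_d).
Hypothesis hsc : valid_schedule sc.
Hypothesis hp0 : dotv p0 p0 = 1.
Hypothesis hq : dotv q q = 1.

Local Notation P := (pref sc p0 q).
Local Notation x t := (dotv (pref sc p0 q t) q).

Lemma step_ge0 t : 0 <= step sc t.
Proof.
move: hsc; case: sc => [eta|eta s] /= h; first exact: ltW.
by rewrite divr_ge0 // ler0n.
Qed.

Lemma P_unit t : dotv (P t) (P t) = 1.
Proof.
elim: t => //= t IH.
by move: (@step_facts _ _ _ _ _ (step_ge0 t) IH hq) => /= [_ [_ [_ [h _]]]].
Qed.

Lemma x_succ t : exists n, 0 < n /\ n ^+ 2 = 1 + (step sc t * (2 + step sc t)) * (x t) ^+ 2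
  /\ x t.+1 = n^-1 * ((1 + step sc t) * x t)
  /\ P t.+1 = n^-1 *: P t + (n^-1 * step sc t * x t) *: q.
Proof.
move: (@step_facts _ _ _ _ _ (step_ge0 t) (P_unit t) hq) => /= [E [n0 [n2 [_ h]]]].
eexists; split; first exact: n0.
split; first by rewrite n2 E.
split; first exact: h.
by rewrite /= scalerDr scalerA mulrA.
Qed.

Lemma sg_x t : Num.sg (x t) = Num.sg (x 0).
Proof.
elim: t => // t IH.
have [n [n0 [_ [-> _]]]] := x_succ t.
rewrite !sgrM IH gtr0_sg ?invr_gt0 // gtr0_sg ?mul1r //.
have := step_ge0 t; lra.
Qed.

Lemma cone t : exists a b : R, 0 <= a /\ 0 <= b /\
      P t = a *: p0 + b *: (Num.sg (x 0) *: q).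
Proof.
elim: t => [|t [a [b [a0 [b0 IH]]]]].
  by exists 1, 0; rewrite scale1r scale0r addr0.
have [n [n0 [_ [_ ->]]]] := x_succ t.
exists (n^-1 * a), (n^-1 * b + n^-1 * step sc t * `|x t|).
split; first by rewrite mulr_ge0 // invr_ge0 ltW.
split.
  rewrite addr_ge0 // mulr_ge0 //; last by rewrite mulr_ge0 // ?step_ge0 // invr_ge0 ltW.
  by rewrite invr_ge0 ltW.
have sx := sg_x t; have ex := numEsg (x t).
move: sx ex; set xt := x t => sx ex.
rewrite IH scalerDr !scalerA -addrA -scalerDl; congr (_ + _); congr (_ *: _).
rewrite -sx.
have -> : n^-1 * step sc t * xt = n^-1 * step sc t * (Num.sg xt * `|xt|) by rewrite -ex.
ring.
Qed.

Lemma gamma0 : gamma sc 0 = 1.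
Proof.
move: hsc; case: sc => [eta|eta s] /= h; first by rewrite expr0 invr1.
rewrite big1 // => k _; rewrite add0n divff // pnatr_eq0 -lt0n addn_gt0.
by case: h => _ ->.
Qed.

Lemma gammaS t : gamma sc t.+1 = gamma sc t / (1 + step sc t).
Proof.
move: hsc; case: sc => [eta|eta s] /= h.
  rewrite exprS invfM mulrC addrC; congr (_ * _).
case: h => e0 s0.
have := Gtel R s eta t s0.
have hTS : ((t + s)%:R : R) != 0 by rewrite pnatr_eq0 -lt0n addn_gt0 s0 orbT.
have hTSE : ((t + s + eta)%:R : R) != 0 by rewrite pnatr_eq0 -lt0n !addn_gt0 s0 orbT.
move=> E.
apply: (mulIf hTSE); rewrite E.
rewrite [in RHS]natrD.
rewrite natrD in hTSE; field.
have ht : 0 <= (t%:R : R) by rewrite ler0n.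
have hm : 0 <= (eta%:R : R) by rewrite ler0n.
have hs : 1 <= (s%:R : R) by rewrite ler1n.
by apply/andP; split; apply/negP => /eqP; lra.
Qed.

Lemma x_neq0 t : x 0 != 0 -> x t != 0.
Proof. by move=> h; rewrite -sgr_eq0 sg_x sgr_eq0. Qed.

Lemma formula t : x 0 != 0 -> (x t) ^- 2 = 1 + (gamma sc t) ^+ 2 * ((x 0) ^- 2 - 1).
Proof.
move=> h0; elim: t => [|t IH]; first by rewrite gamma0 expr1n mul1r addrC subrK.
have xt0 := x_neq0 t h0.
have [n [n0 [n2 [-> _]]]] := x_succ t.
rewrite gammaS exprMn exprVn invfM invrK n2.
have e1 : 1 + step sc t != 0 by apply/negP => /eqP; have := step_ge0 t; lra.
have nn0 : n != 0 by rewrite gt_eqF.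
move: IH; set X := x t; set G := gamma sc t; set Y := _ - 1; set e := step sc t => IH.
have -> : (G / (1 + e)) ^+ 2 * Y = (G ^+ 2 * Y) / (1 + e) ^+ 2 by field.
have -> : G ^+ 2 * Y = X ^- 2 - 1 by rewrite IH addrC addKr.
field.
by rewrite xt0 e1.
Qed.

Lemma gamma_bound_dec (eta s t : nat) : (0 < eta)%N -> (0 < s)%N ->
  0 <= \prod_(k < eta) ((s + k)%:R / (t + s + k)%:R : R) <= s%:R / (t + s)%:R.
Proof.
case: eta => // m _ s0.
rewrite big_ord_recl /= !addn0.
have f0 : 0 <= (s%:R / (t + s)%:R : R) by rewrite divr_ge0 ?ler0n.
have P0 : 0 <= \prod_(i < m) ((s + bump 0 i)%:R / (t + s + bump 0 i)%:R : R).
  by apply: prodr_ge0 => i _; rewrite divr_ge0 ?ler0n.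
have P1 : \prod_(i < m) ((s + bump 0 i)%:R / (t + s + bump 0 i)%:R : R) <= 1.
  apply: prodr_ile1 => i _; rewrite divr_ge0 ?ler0n //=.
  rewrite ler_pdivrMr ?ltr0n ?addn_gt0 ?s0 ?orbT // mul1r ler_nat.
  by rewrite -addnA leq_addl.
apply/andP; split; first exact: mulr_ge0.
exact: ler_piMr.
Qed.

Lemma gamma_small (δ : R) : 0 < δ -> \forall t \near \oo, `|gamma sc t| <= δ.
Proof.
move=> d0; move: hsc; case: sc => [eta|eta s] /= h.
  have z1 : `|(eta + 1)^-1| < 1.
    rewrite ger0_norm ?invr_ge0; last lra.
    rewrite invf_lt1; lra.
  have /cvgrPdist_le /(_ δ d0) := cvg_expr z1.
  by apply: filterS => t; rewrite sub0r normrN /= exprVn.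
case: h => e0 s0.
have sp : 0 < (s%:R : R) by rewrite ltr0n.
have /cvgrPdist_le /(_ (δ / s%:R)) := @cvg_harmonic R.
move=> /(_ (divr_gt0 d0 sp)); apply: filterS => t.
rewrite sub0r normrN /harmonic /= => H.
have /andP[g0 g1] := gamma_bound_dec eta s t e0 s0.
rewrite ger0_norm //; apply: (le_trans g1).
move: H; set a := (t.+1%:R)^-1 => H.
have a0 : 0 <= a by rewrite invr_ge0 ler0n.
rewrite ger0_norm // in H.
have hsa : s%:R * a <= δ.
  have := ler_wpM2l (ltW sp) H.
  by rewrite [s%:R * (_ / _)]mulrC divfK ?gt_eqF.
have ha : a * t.+1%:R = 1 by rewrite mulVf // pnatr_eq0.
have ht : (t.+1%:R : R) <= (t + s)%:R by rewrite ler_nat -addn1 leq_add2l.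
rewrite ler_pdivrMr; last by rewrite ltr0n addn_gt0 s0 orbT.
move: ha ht; rewrite -natr1 natrD => ha ht.
have tt : 0 <= (t%:R : R) by rewrite ler0n.
nra.
Qed.

Lemma conv_pos : 0 < x 0 -> P t @[t --> \oo] --> q.
Proof.
move=> x0p.
have x00 : x 0 != 0 by rewrite gt_eqF.
have c0 := @cs _ _ _ _ hp0 hq.
have Y0 : 0 <= (x 0) ^- 2 - 1.
  by rewrite subr_ge0 invf_ge1 // exprn_gt0.
move: Y0; set Y := (x 0) ^- 2 - 1 => Y0.
apply/cvgrPdist_le => e e0.
pose δ := e / (1 + 2 * Y).
have dp : 0 < δ by rewrite divr_gt0 //; lra.
have de : δ * (1 + 2 * Y) = e by rewrite /δ divfK // gt_eqF //; lra.
move: (gamma_small δ dp); apply: filterS => t hg.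
rewrite [leLHS]/Num.Def.normr /= mx_normrE (bigmax_le _ (ltW e0)) //= => -[i j] _ /=.
rewrite (ord1 i).
have xtp : 0 < x t by rewrite -sgr_gt0 sg_x sgr_gt0.
have c := @cs _ _ _ _ (P_unit t) hq.
have F := formula t x00.
have hz := @entry_le _ _ (q - P t) j.
have D : dotv (q - P t) (q - P t) = 2 - 2 * x t.
  rewrite dotvDl !dotvDr !dotvNl !dotvNr hq P_unit (@dotvC _ _ q (P t)); ring.
rewrite D in hz.
move: F c xtp hz hg; rewrite -/Y.
set X := x t; set G := gamma sc t; set z := (q - P t) 0 j => F c xtp hz hg.
have xt0 : X != 0 by rewrite gt_eqF.
have E : 1 - X ^+ 2 = X ^+ 2 * (G ^+ 2 * Y).
  have h : X ^+ 2 * X ^- 2 = 1 by rewrite mulfV // expf_neq0.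
  by rewrite F in h; rewrite -{1}h; ring.
have s1 : 2 - 2 * X <= 2 * (1 - X ^+ 2) by nra.
have GY : 0 <= G ^+ 2 * Y by rewrite mulr_ge0 // sqr_ge0.
have s2 : X ^+ 2 * (G ^+ 2 * Y) <= G ^+ 2 * Y by rewrite ler_piMl // sqr_ge0.
have hG : G ^+ 2 <= δ ^+ 2.
  move: hg; rewrite ler_norml => /andP[g1 g2]; nra.
have s3 : G ^+ 2 * Y <= δ ^+ 2 * Y by rewrite ler_wpM2r.
have s4 : 2 * (δ ^+ 2 * Y) <= e ^+ 2.
  rewrite -de; nra.
rewrite ler_norml; apply/andP; split; nra.
Qed.
End Dyn.

Lemma pref_negq (R : realType) (d : nat) (sc : schedule R) (p0 q : 'rV[R]_d) t :
  pref sc p0 (-q) t = pref sc p0 q t.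
Proof.
elim: t => //= t ->.
by rewrite dotvNr mulrN scaleNr scalerN opprK.
Qed.

Theorem proposition1 (R : realType) (d : nat) (sc : schedule R) (p0 q : 'rV[R]_d) :
  valid_schedule sc -> on_sphere p0 -> on_sphere q ->
  (0 < dotv p0 q -> pref sc p0 q t @[t --> \oo] --> q) /\
  (dotv p0 q < 0 -> pref sc p0 q t @[t --> \oo] --> - q) /\
  (forall t : nat, exists a b : R, 0 <= a /\ 0 <= b /\
      pref sc p0 q t = a *: p0 + b *: (Num.sg (dotv p0 q) *: q)) /\
  (dotv p0 q != 0 -> forall t : nat,
      (dotv (pref sc p0 q t) q) ^- 2
        = 1 + (gamma sc t) ^+ 2 * ((dotv p0 q) ^- 2 - 1)).
Proof.
move=> hsc hp hq'.
have hp0 := @sphere_dot _ _ _ hp; have hq := @sphere_dot _ _ _ hq'.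
split; first by move=> h; exact: (@conv_pos _ _ sc p0 q hsc hp0 hq h).
split.
  move=> h.
  have hq2 : dotv (-q) (-q) = 1 by rewrite dotvNl dotvNr opprK.
  have h2 : 0 < dotv p0 (-q) by rewrite dotvNr oppr_gt0.
  have E : (fun t => pref sc p0 q t) = (fun t => pref sc p0 (-q) t).
    by apply: funext => t; rewrite pref_negq.
  rewrite E; exact: (@conv_pos _ _ sc p0 (-q) hsc hp0 hq2 h2).
split; first exact: (@cone _ _ sc p0 q hsc hp0 hq).
by move=> h t; exact: (@formula _ _ sc p0 q hsc hp0 hq t h).
Qed.
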